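(* Let $q$ be a power of an odd prime, $0<t<r_1<r_2<\cdots<r_k<n$ integers, and $a_1,\dots,a_k\in\mathbb{F}_{q^n}^*$ whose multiplicative orders all divide $q^t-1$. Then $S(x)=\sum_{i=1}^k a_ix^{q^{r_i}}$ is a scattered polynomial of index $t$ over $\mathbb{F}_{q^n}$ if and only if, for every $\rho\in\mathbb{F}_{q^n}^*\setminus\mathbb{F}_q$, the polynomial $$S^t_\rho(x)=\sum_{i=1}^k a_i\big(\rho^{q^{r_i-t}}-\rho\big)x^{q^{r_i-t}}\in\mathbb{F}_{q^n}[x]$$ is a permutation polynomial of $\mathbb{F}_{q^n}$.
   Context: An $\mathbb{F}_q$-linearized polynomial $S\in\mathbb{F}_{q^n}[x]$ is a scattered polynomial of index $t$ over $\mathbb{F}_{q^n}$ if for all $y,z\in\mathbb{F}_{q^n}^*$, $\frac{S(y)}{y^{q^t}}=\frac{S(z)}{z^{q^t}}$ implies $y/z\in\mathbb{F}_q$. *)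

(* Defs.v *)
From HB Require Import structures.
From mathcomp Require Import all_boot all_order all_algebra all_field.
Set Implicit Arguments. Unset Strict Implicit. Unset Printing Implicit Defensive.
Import GRing.Theory.
Local Open Scope ring_scope.

Definition in_Fq (F : finFieldType) (q : nat) (x : F) : bool := x ^+ q == x.

Definition scattered_index (F : finFieldType) (q t : nat) (S : {poly F}) : Prop :=
  forall y z : F, y != 0 -> z != 0 ->
    S.[y] / y ^+ (q ^ t) = S.[z] / z ^+ (q ^ t) -> in_Fq q (y / z).

Definition permutation_poly (F : finFieldType) (P : {poly F}) : Prop :=
  bijective (fun x : F => P.[x]).

(* Main.v *)
Require Import Defs.
From HB Require Import structures.
From mathcomp Require Import all_boot all_order all_algebra all_field.
From mathcomp Require Import ring.
Import GRing.Theory.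
Local Open Scope ring_scope.

Section Aux.
Variable F : finFieldType.
Variable p : nat.
Hypothesis chF : p \in [pchar F].

Lemma frobD m (x y : F) : (x + y) ^+ (p ^ m) = x ^+ (p ^ m) + y ^+ (p ^ m).
Proof.
apply: exprDn_pchar; by rewrite pnatX pnatE ?chF //; exact: (pcharf_prime chF).
Qed.

Lemma frobB m (x y : F) : (x - y) ^+ (p ^ m) = x ^+ (p ^ m) - y ^+ (p ^ m).
Proof. by apply/eqP; rewrite eq_sym subr_eq -frobD subrK. Qed.

Lemma frob_sum m k (f : 'I_k -> F) :
  (\sum_(i < k) f i) ^+ (p ^ m) = \sum_(i < k) f i ^+ (p ^ m).
Proof.
apply: (big_morph (fun x => x ^+ (p ^ m))); first exact: frobD.
by rewrite expr0n expn_eq0 eqn0Ngt (prime_gt0 (pcharf_prime chF)).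
Qed.
End Aux.

Theorem mainTheorem7 (F : finFieldType) (q n t k : nat)
  (r : 'I_k -> nat) (a : 'I_k -> F) :
  (exists p e : nat, [/\ prime p, odd p, (0 < e)%N & q = (p ^ e)%N]) ->
  #|F| = (q ^ n)%N ->
  (0 < t)%N ->
  (forall i : 'I_k, (t < r i)%N /\ (r i < n)%N) ->
  (forall i j : 'I_k, (i < j)%N -> (r i < r j)%N) ->
  (forall i : 'I_k, a i != 0 /\ a i ^+ (q ^ t).-1 = 1) ->
  scattered_index q t (\sum_(i < k) a i *: 'X^(q ^ r i)) <->
  (forall rho : F, rho != 0 -> ~~ in_Fq q rho ->
     permutation_poly
       (\sum_(i < k) (a i * (rho ^+ (q ^ (r i - t)) - rho)) *: 'X^(q ^ (r i - t)))).
Proof.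
move=> [p [e [pp _ e0 ->]]] cardF t0 hr _ ha.
have chF : p \in [pchar F] by apply: (@card_finPcharP F p (e*n)) pp; rewrite cardF expnM.
set S := \sum_(i < k) _.
set Q := ((p ^ e) ^ t)%N.
have Q0 : (0 < Q)%N by rewrite !expn_gt0 prime_gt0.
have QE m : ((p ^ e) ^ m = p ^ (e * m))%N by rewrite expnM.
have hS y : S.[y] = \sum_(i < k) a i * y ^+ ((p ^ e) ^ r i).
  by rewrite /S horner_sum; apply: eq_bigr => i _; rewrite hornerZ hornerXn.
have aQ i : a i ^+ Q = a i.
  by rewrite -[Q](prednK Q0) exprS (proj2 (ha i)) mulr1.
pose P rho := \sum_(i < k) (a i * (rho ^+ ((p ^ e) ^ (r i - t)) - rho)) *: 'X^((p ^ e) ^ (r i - t)).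
have hP rho y : (P rho).[y] = \sum_(i < k) a i * (rho ^+ ((p ^ e) ^ (r i - t)) - rho) * y ^+ ((p ^ e) ^ (r i - t)).
  by rewrite /P horner_sum; apply: eq_bigr => i _; rewrite hornerZ hornerXn.
have PB rho x y : (P rho).[x - y] = (P rho).[x] - (P rho).[y].
  rewrite !hP -sumrB; apply: eq_bigr => i _.
  by rewrite QE (@frobB _ _ chF) -QE mulrBr.
have key rho y : (P rho).[y] ^+ Q = S.[rho * y] - rho ^+ Q * S.[y].
  rewrite hP /Q QE (@frob_sum _ _ chF) -QE !hS mulr_sumr -sumrB; apply: eq_bigr => i _.
  have rt : (r i - t + t = r i)%N by rewrite subnK // ltnW // (proj1 (hr i)).
  rewrite !exprMn aQ (QE t) (@frobB _ _ chF) -(QE t) -!exprM -!expnD rt.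
  ring.
have P0 rho : (P rho).[0] = 0 by have := PB rho 0 0; rewrite subrr => h; rewrite {1}h subrr.
split.
- move=> scat rho rho0 nF; apply: injF_bij => x y exy.
  apply/eqP; rewrite -subr_eq0; apply/contraT => w0.
  have Pw : (P rho).[x - y] = 0 by rewrite PB exy subrr.
  have := key rho (x - y); rewrite Pw expr0n eqn0Ngt Q0 /= => /eqP.
  rewrite eq_sym subr_eq0 => /eqP h.
  have : in_Fq (p ^ e) (rho * (x - y) / (x - y)).
    apply: scat; [by rewrite mulf_neq0 | by [] |].
    by rewrite h exprMn; field; rewrite ?mulf_neq0 ?expf_neq0.
  by rewrite mulfK // (negbTE nF).
- move=> perm y z y0 z0 hyz.
  case fq: (in_Fq (p ^ e) (y / z)) => //.
  have rho0 : y / z != 0 by rewrite mulf_neq0 ?invr_eq0.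
  have [g gK _] := perm _ rho0 (negbT fq).
  have inj : injective (fun x => (P (y / z)).[x]) := can_inj gK.
  suff : (P (y / z)).[z] = (P (y / z)).[0] by move/inj/eqP; rewrite (negbTE z0).
  rewrite P0; apply/eqP; suff: (P (y / z)).[z] ^+ Q == 0 by rewrite expf_eq0 Q0.
  rewrite key divfK //.
  rewrite -/Q in hyz; have hy : S.[y] = S.[z] / z ^+ Q * y ^+ Q by rewrite -hyz divfK // expf_neq0.
  rewrite hy exprMn exprVn; apply/eqP; move: (S.[z]) (y ^+ Q) (z ^+ Q) (expf_neq0 Q z0) => s u v v0.
  by field.
Qed.
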